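(* Let $m\in\mathbb{Z}_{>0}\cup\{\infty\}$ and $n\ge 1$. Let $\tilde W$ be the subalgebra of $H(m,1,n)$ generated by $\tau,\tau^{-1},\sigma_1,\dots,\sigma_{n-2}$. Then every $x\in H(m,1,n)$ is an $\mathcal{A}_m$-linear combination of elements of the form $$\sigma_j^{-1}\sigma_{j-1}^{-1}\cdots\sigma_1^{-1}\,\tau^{\alpha}\,\sigma_1\sigma_2\cdots\sigma_{n-1}\,w,\qquad j\in\{0,\dots,n-1\},\ \alpha\in\mathfrak{E}_m,\ w\in\tilde W$$ (empty products equal $1$).
   Context: $q,v_1,\dots,v_m$ are indeterminates; $\mathcal{A}_m:=\mathbb{C}[q^{\pm1},v_1^{\pm1},\dots,v_m^{\pm1}]$ for finite $m$ and $\mathcal{A}_\infty:=\mathbb{C}[q,q^{-1}]$. $\mathfrak{E}_m:=\{0,\dots,m-1\}$ for finite $m$, $\mathfrak{E}_\infty:=\mathbb{Z}$. The algebra $H(m,1,n)$ is the associative $\mathcal{A}_m$-algebra generated by $\tau,\tau^{-1},\sigma_1,\dots,\sigma_{n-1}$ (with $\tau\tau^{-1}=\tau^{-1}\tau=1$) subject to: $\sigma_i\sigma_{i+1}\sigma_i=\sigma_{i+1}\sigma_i\sigma_{i+1}$ ($1\le i\le n-2$); $\sigma_i\sigma_j=\sigma_j\sigma_i$ for $|i-j|>1$; $\tau\sigma_1\tau\sigma_1=\sigma_1\tau\sigma_1\tau$; $\tau\sigma_i=\sigma_i\tau$ for $i>1$; $\sigma_i^2=(q-q^{-1})\sigma_i+1$;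 and, if $m<\infty$, $(\tau-v_1)\cdots(\tau-v_m)=0$. (For $m=\infty$ this is the affine Hecke algebra of type GL.) *)

(* Defs.v *)
From mathcomp Require Import all_boot all_algebra.
From mathcomp Require Import complex Rstruct.
Set Implicit Arguments. Unset Strict Implicit. Unset Printing Implicit Defensive.
Import GRing.Theory.
Local Open Scope ring_scope.

Definition Cx : fieldType := (Rdefinitions.R)[i].

(* m in Z_{>0} ∪ {∞}: [Some k] is the finite value k, [None] is ∞. *)
Definition mval := option nat.

Definition mval_ok (m : mval) : Prop :=
  match m with Some k => (0 < k)%N | None => True end.

(* indices k of the parameters v_k of A_m : 1 <= k <= m (none if m = ∞) *)
Definition vidx (m : mval) (k : nat) : Prop :=
  match m with Some mm => (1 <= k <= mm)%N | None => False end.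

Definition Eset (m : mval) (a : int) : Prop :=
  match m with Some mm => (0 <= a)%R /\ (a < mm%:Z)%R | None => True end.

Section Hecke.
Variable S : algType Cx.

Definition tpow (t ti : S) (a : int) : S :=
  match a with Posz k => t ^+ k | Negz k => ti ^+ k.+1 end.

Inductive gen_alg (G : S -> Prop) : S -> Prop :=
  | ga_scal (c : Cx) : gen_alg G (c%:A)
  | ga_gen x : G x -> gen_alg G x
  | ga_add x y : gen_alg G x -> gen_alg G y -> gen_alg G (x + y)
  | ga_mul x y : gen_alg G x -> gen_alg G y -> gen_alg G (x * y).

Definition lin_comb (A B : S -> Prop) (x : S) : Prop :=
  exists l : seq (S * S),
    (forall p, List.In p l -> A p.1 /\ B p.2) /\
    x = \sum_(p <- l) p.1 * p.2.

(* The defining relations of H(m,1,n), for elements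
   q, qi (= q^-1), v k, vi k (= v_k^-1) (images of A_m, central),
   t (= tau), ti (= tau^-1), s i (= sigma_i, 1 <= i <= n-1). *)
Definition hecke_rel (m : mval) (n : nat) (q qi : S) (v vi : nat -> S)
    (t ti : S) (s : nat -> S) : Prop :=
  [/\ [/\ q * qi = 1 /\ qi * q = 1,
      forall k, vidx m k -> v k * vi k = 1 /\ vi k * v k = 1,
      (forall x : S, q * x = x * q) /\
        (forall k, vidx m k -> forall x : S, v k * x = x * v k) &
      t * ti = 1 /\ ti * t = 1],
   [/\ forall i, (1 <= i)%N -> (i <= n - 2)%N ->
         s i * s i.+1 * s i = s i.+1 * s i * s i.+1,
       forall i j, (1 <= i <= n - 1)%N -> (1 <= j <= n - 1)%N ->
         ((i.+1 < j) || (j.+1 < i))%N -> s i * s j = s j * s i,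
       (2 <= n)%N -> t * s 1 * t * s 1 = s 1 * t * s 1 * t,
       forall i, (1 < i <= n - 1)%N -> t * s i = s i * t &
       forall i, (1 <= i <= n - 1)%N -> s i ^+ 2 = (q - qi) * s i + 1] &
       match m with
       | Some mm => \prod_(1 <= k < mm.+1) (t - v k) = 0
       | None => True
       end].
End Hecke.

(* Main.v *)
Require Import Defs.
From mathcomp Require Import all_boot all_algebra zify.
Set Implicit Arguments. Unset Strict Implicit.
Import GRing.Theory.
Local Open Scope ring_scope.
Section Gen.
Variable S : algType Cx.
Implicit Types G : S -> Prop.

Lemma gen_mono G1 G2 x : (forall y, G1 y -> G2 y) -> gen_alg G1 x -> gen_alg G2 x.
Proof. move=> H; elim=> *; [exact: ga_scal|apply: ga_gen; auto|exact: ga_add|exact: ga_mul]. Qed.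

Lemma gen1 G : gen_alg G 1.
Proof. by have := ga_scal G 1; rewrite scale1r. Qed.

Lemma gen_opp G x : gen_alg G x -> gen_alg G (- x).
Proof. move=> h; have := ga_mul (ga_scal G (-1)) h; by rewrite mulr_algl scaleN1r. Qed.

Lemma gen_sub G x y : gen_alg G x -> gen_alg G y -> gen_alg G (x - y).
Proof. by move=> hx hy; apply: ga_add => //; apply: gen_opp. Qed.

Lemma gen_exp G x k : gen_alg G x -> gen_alg G (x ^+ k).
Proof. move=> h; elim: k => [|k IH]; first by rewrite expr0; apply: gen1. by rewrite exprS; apply: ga_mul. Qed.

Lemma comm_inv (x a b : S) : x * a = a * x -> a * b = 1 -> b * a = 1 -> x * b = b * x.
Proof.
move=> h ab ba.
by rewrite -[x * b]mul1r -ba -mulrA (mulrA a) -h -!mulrA ab mulr1.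
Qed.

Lemma comm_prod (x : S) a b (F : nat -> S) :
  (forall i, (a <= i < b)%N -> x * F i = F i * x) ->
  x * \prod_(a <= i < b) F i = (\prod_(a <= i < b) F i) * x.
Proof.
move=> H; rewrite big_nat_cond.
apply: (big_ind (fun y => x * y = y * x)).
- by rewrite mulr1 mul1r.
- by move=> y z Hy Hz; rewrite mulrA Hy -mulrA Hz mulrA.
- by move=> i /andP[Hi _]; apply: H.
Qed.
End Gen.
Lemma zm (V : zmodType) (A B C D : V) : A - B - D = (A - D) - (B - C) - C.
Proof. rewrite opprB. rewrite -[_ + (C - B) - C]addrA. rewrite (addrAC C) subrr add0r addrAC //. Qed.
Lemma zm2 (V : zmodType) (A B D E : V) : A - B + E = (A - D) - (B - E) + D.
Proof. by rewrite opprB [RHS]addrAC subrK addrA [RHS]addrAC. Qed.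
Lemma zm3 (V : zmodType) (X Y Z W : V) : (X - Y) + (Z - W) = X + Z - (Y + W).
Proof. by rewrite opprD addrACA. Qed.
Section Main.
Variables (m : mval) (n : nat) (S : algType Cx)
  (q qi : S) (v vi : nat -> S) (t ti : S) (s si : nat -> S).
Hypothesis Hm : mval_ok m.
Hypothesis Hn : (1 <= n)%N.
Hypothesis hqq : q * qi = 1.
Hypothesis hqq' : qi * q = 1.
Hypothesis hvv : forall k, vidx m k -> v k * vi k = 1.
Hypothesis hvv' : forall k, vidx m k -> vi k * v k = 1.
Hypothesis hqc : forall x : S, q * x = x * q.
Hypothesis hvc : forall k, vidx m k -> forall x : S, v k * x = x * v k.
Hypothesis htt : t * ti = 1.
Hypothesis htt' : ti * t = 1.
Hypothesis hbr : forall i, (1 <= i)%N -> (i <= n - 2)%N ->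
         s i * s i.+1 * s i = s i.+1 * s i * s i.+1.
Hypothesis hfar : forall i j, (1 <= i <= n - 1)%N -> (1 <= j <= n - 1)%N ->
         ((i.+1 < j) || (j.+1 < i))%N -> s i * s j = s j * s i.
Hypothesis hts1 : (2 <= n)%N -> t * s 1 * t * s 1 = s 1 * t * s 1 * t.
Hypothesis hts : forall i, (1 < i <= n - 1)%N -> t * s i = s i * t.
Hypothesis hquad : forall i, (1 <= i <= n - 1)%N -> s i ^+ 2 = (q - qi) * s i + 1.
Hypothesis hpoly : match m with
       | Some mm => \prod_(1 <= k < mm.+1) (t - v k) = 0
       | None => True
       end.
Hypothesis hsi : forall i, (1 <= i <= n - 1)%N -> s i * si i = 1 /\ si i * s i = 1.

Definition coefP (y : S) := y = q \/ y = qi \/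
                 exists k, vidx m k /\ (y = v k \/ y = vi k).
Definition WtP (y : S) := y = q \/ y = qi \/
                 (exists k, vidx m k /\ (y = v k \/ y = vi k)) \/
                 y = t \/ y = ti \/
                 (exists i, (1 <= i <= n - 2)%N /\ y = s i).
Definition HP (y : S) := y = q \/ y = qi \/
                 (exists k, vidx m k /\ (y = v k \/ y = vi k)) \/
                 y = t \/ y = ti \/
                 (exists i, (1 <= i <= n - 1)%N /\ y = s i).
Definition coef := gen_alg coefP.
Definition Wt := gen_alg WtP.
Definition Hg := gen_alg HP.

Lemma coefP_central y : coefP y -> forall x, y * x = x * y.
Proof.
case=> [->|[->|[k [hk [->|->]]]]] x.
- exact: hqc.
- exact: esym (comm_inv (esym (hqc x)) hqq hqq').
- exact: hvc.
- exact: esym (comm_inv (esym (hvc hk x)) (hvv hk) (hvv' hk)).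
Qed.

Lemma coef_central c : coef c -> forall x, c * x = x * c.
Proof.
elim=> [a|y hy|y z _ IHy _ IHz|y z _ IHy _ IHz] x.
- by rewrite mulr_algl mulr_algr.
- exact: coefP_central.
- by rewrite mulrDl mulrDr IHy IHz.
- by rewrite -mulrA IHz mulrA IHy mulrA.
Qed.

Lemma coef_Wt c : coef c -> Wt c.
Proof. apply: gen_mono => y; rewrite /coefP /WtP; tauto. Qed.
Lemma coef_H c : coef c -> Hg c.
Proof. apply: gen_mono => y; rewrite /coefP /HP; tauto. Qed.

Lemma coef1 : coef 1. Proof. exact: gen1. Qed.

Definition LC (B : S -> Prop) := lin_comb coef B.

Lemma LC0 B : LC B 0.
Proof. by exists [::]; rewrite big_nil. Qed.

Lemma LCD B x y : LC B x -> LC B y -> LC B (x + y).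
Proof.
move=> [l1 [h1 ->]] [l2 [h2 ->]]; exists (l1 ++ l2); split; last by rewrite big_cat.
by move=> p hp; case: (List.in_app_or _ _ _ hp) => ?; [apply: h1|apply: h2].
Qed.

Lemma LCb (B : S -> Prop) b : B b -> LC B b.
Proof.
move=> hb; exists [:: (1, b)]; split; last by rewrite big_seq1 mul1r.
by move=> p [<-|[]]; split => //; apply: coef1.
Qed.

Lemma LCc B c x : coef c -> LC B x -> LC B (c * x).
Proof.
move=> hc [l [hl ->]]; exists [seq (c * p.1, p.2) | p <- l]; split.
  move=> p /List.in_map_iff [p' [<- hp']] /=; have [h1 h2] := hl _ hp'.
  by split => //; apply: ga_mul.
by rewrite big_map mulr_sumr; apply: eq_bigr => p _; rewrite mulrA.
Qed.

Lemma LCN B x : LC B x -> LC B (- x).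
Proof. move=> h; have := LCc (ga_scal _ (-1)) h; by rewrite mulr_algl scaleN1r. Qed.

Lemma LCB B x y : LC B x -> LC B y -> LC B (x - y).
Proof. by move=> hx hy; apply: LCD => //; apply: LCN. Qed.

Lemma LCsand B B' (L R x : S) : (forall b, B b -> LC B' (L * b * R)) ->
  LC B x -> LC B' (L * x * R).
Proof.
move=> H [l [hl ->]]; elim: l hl => [|p l IH] hl.
  by rewrite big_nil mulr0 mul0r; apply: LC0.
rewrite big_cons mulrDr mulrDl; apply: LCD; last by apply: IH => p' hp'; apply: hl; right.
have [h1 h2] := hl p (or_introl erefl).
rewrite mulrA -(coef_central h1 L) -!mulrA; apply: LCc => //.
by rewrite mulrA; apply: H.
Qed.

Lemma LCmono (B B' : S -> Prop) x : (forall b, B b -> B' b) -> LC B x -> LC B' x.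
Proof.
move=> h hx; rewrite -[x]mul1r -[_ * x]mulr1; apply: (LCsand _ hx) => b hb.
by rewrite mul1r mulr1; apply: LCb; auto.
Qed.


Definition c : S := locked (q - qi).
Lemma coef_c : coef c.
Proof. rewrite /c -lock; apply: gen_sub; apply: ga_gen; rewrite /coefP; tauto. Qed.
Lemma c_central x : c * x = x * c.
Proof. exact: coef_central coef_c x. Qed.

Lemma si_eq i : (1 <= i <= n - 1)%N -> si i = s i - c.
Proof.
move=> hi; have [h1 h2] := hsi hi.
have e : s i * (s i - c) = 1.
  by rewrite mulrBr -expr2 hquad // -c_central /c -lock addrC addKr.
by rewrite -[si i]mulr1 -e mulrA h2 mul1r.
Qed.

Lemma s_eq i : (1 <= i <= n - 1)%N -> s i = si i + c.
Proof. by move=> hi; rewrite si_eq // subrK. Qed.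

Definition P := \prod_(1 <= i < n) s i.
Definition cinv j := \prod_(0 <= k < j) si (j - k)%N.
Definition Dsh j := \prod_(0 <= k < j) si (j.+1 - k)%N.

Lemma cinv0 : cinv 0 = 1.
Proof. by rewrite /cinv big_geq. Qed.
Lemma cinvS j : cinv j.+1 = si j.+1 * cinv j.
Proof.
by rewrite /cinv big_nat_recl // subn0.
Qed.
Lemma Dsh0 : Dsh 0 = 1.
Proof. by rewrite /Dsh big_geq. Qed.
Lemma DshS j : Dsh j.+1 = si j.+2 * Dsh j.
Proof.
by rewrite /Dsh big_nat_recl // subn0.
Qed.
Lemma cinv_Dsh j : cinv j.+1 = Dsh j * si 1.
Proof.
elim: j => [|j IH]; first by rewrite cinvS cinv0 Dsh0 mulr1 mul1r.
by rewrite cinvS IH DshS mulrA.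
Qed.

Lemma comm_cinv x j : (forall k, (1 <= k <= j)%N -> x * si k = si k * x) ->
  x * cinv j = cinv j * x.
Proof.
elim: j => [|j IH] H; first by rewrite cinv0 mulr1 mul1r.
rewrite cinvS mulrA H; last by rewrite leqnn.
rewrite -!mulrA IH // => k /andP[k1 kj]; apply: H; rewrite k1 /=; exact: leqW.
Qed.

Lemma comm_Dsh x j : (forall k, (2 <= k <= j.+1)%N -> x * si k = si k * x) ->
  x * Dsh j = Dsh j * x.
Proof.
elim: j => [|j IH] H; first by rewrite Dsh0 mulr1 mul1r.
rewrite DshS mulrA H; last by rewrite leqnn.
rewrite -!mulrA IH // => k /andP[k1 kj]; apply: H; rewrite k1 /=; exact: leqW.
Qed.

Lemma sP k : (1 <= k)%N -> (k <= n - 2)%N -> s k.+1 * P = P * s k.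
Proof.
move=> k1 kn.
have kn' : (k.+2 <= n)%N by lia.
rewrite /P (big_cat_nat (n:=k)) //; last by lia.
rewrite (big_ltn (m:=k)) //; last by lia.
rewrite (big_ltn (m:=k.+1)) //.
set A := \prod_(1 <= i < k) s i.
set C := \prod_(k.+2 <= i < n) s i.
have hA : s k.+1 * A = A * s k.+1.
  apply: comm_prod => i hi; apply: hfar; try lia.
have hC : s k * C = C * s k.
  apply: comm_prod => i hi; apply: hfar; try lia.
rewrite mulrA hA -!mulrA -hC !mulrA; congr (_ * _); rewrite -!mulrA; congr (_ * _); rewrite !mulrA; exact: esym (hbr _ _).
Qed.

Lemma siP k : (1 <= k)%N -> (k <= n - 2)%N -> si k.+1 * P = P * si k.
Proof.
move=> k1 kn.
have [a1 a2] := hsi (i:=k) ltac:(lia).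
have [b1 b2] := hsi (i:=k.+1) ltac:(lia).
by rewrite -[si k.+1 * P]mulr1 -a1 mulrA -(mulrA _ P) -sP // mulrA b2 mul1r.
Qed.

Lemma Dsh_P j : (j.+1 <= n - 1)%N -> Dsh j * P = P * cinv j.
Proof.
elim: j => [|j IH] hj; first by rewrite Dsh0 cinv0 mulr1 mul1r.
by rewrite DshS -mulrA IH; last lia; rewrite mulrA siP; try lia; rewrite -mulrA cinvS.
Qed.

Lemma cinv_P_one j : (j <= n - 1)%N -> cinv j * \prod_(1 <= i < j.+1) s i = 1.
Proof.
elim: j => [|j IH] hj; first by rewrite cinv0 big_geq // mul1r.
rewrite cinvS big_nat_recr // mulrA -(mulrA (si _)) IH; last lia.
by rewrite mulr1; have [_ ->] := hsi (i:=j.+1) ltac:(lia).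
Qed.

Definition tp a := tpow t ti a.

Lemma tp0 : tp 0 = 1. Proof. by rewrite /tp /= expr0. Qed.
Lemma tp1 : tp 1 = t. Proof. by rewrite /tp /= expr1. Qed.

Lemma tpS a : t * tp a = tp (a + 1).
Proof.
case: a => [k|k] /=.
  by rewrite addn1 exprS.
case: k => [|k]; first by rewrite /tp /= expr1 htt expr0.
have -> : Negz k.+1 + 1 = Negz k by lia.
by rewrite /tp /= exprS mulrA htt mul1r.
Qed.

Lemma tpP a : ti * tp a = tp (a - 1).
Proof.
case: a => [k|k] /=.
  case: k => [|k]; first by rewrite /tp /= expr0 mulr1 expr1.
  have -> : Posz k.+1 - 1 = Posz k by lia.
  by rewrite /tp /= exprS mulrA htt' mul1r.
by rewrite addn0 -exprS.
Qed.

Lemma tp_comm x a : x * t = t * x -> x * tp a = tp a * x.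
Proof.
move=> h; have h' := comm_inv h htt htt'.
case: a => [k|k] /=; rewrite /tp /=.
  exact: commrX k h.
exact: commrX k.+1 h'.
Qed.

Lemma tpSr a : tp a * t = tp (a + 1).
Proof. by rewrite -tpS tp_comm. Qed.
Lemma tpPr a : tp a * ti = tp (a - 1).
Proof. by rewrite -tpP; apply: esym; apply: tp_comm; rewrite htt htt'. Qed.

Lemma Wt_t : Wt t. Proof. by apply: ga_gen; rewrite /WtP; tauto. Qed.
Lemma Wt_ti : Wt ti. Proof. by apply: ga_gen; rewrite /WtP; tauto. Qed.
Lemma Wt_s i : (1 <= i <= n - 2)%N -> Wt (s i).
Proof. by move=> hi; apply: ga_gen; rewrite /WtP; right; right; right; right; right; exists i. Qed.
Lemma Wt_si i : (1 <= i <= n - 2)%N -> Wt (si i).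
Proof. move=> hi; rewrite si_eq; last lia; apply: gen_sub; [exact: Wt_s|exact: coef_Wt coef_c]. Qed.
Lemma Wt_tp a : Wt (tp a).
Proof. case: a => k; rewrite /tp /=; apply: gen_exp; [exact: Wt_t|exact: Wt_ti]. Qed.
Lemma Wt_cinv j : (j <= n - 2)%N -> Wt (cinv j).
Proof.
elim: j => [|j IH] hj; first by rewrite cinv0; apply: gen1.
rewrite cinvS; apply: ga_mul; [apply: Wt_si; lia|apply: IH; lia].
Qed.

Definition BT (b : S) := exists a, Eset m a /\ b = tp a.
Definition Lin r := LC (fun b => exists i, (i < r)%N /\ b = t ^+ i).

Lemma Lin_mono r r' x : (r <= r')%N -> Lin r x -> Lin r' x.
Proof. move=> h; apply: LCmono => b [i [hi ->]]; exists i; split => //; lia. Qed.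

Lemma Lin_t r x : Lin r x -> Lin r.+1 (x * t).
Proof.
move=> hx; rewrite /Lin in hx *; rewrite -[x * t]mul1r mulrA; apply: (LCsand _ hx) => b [i [hi ->]].
by rewrite mul1r -exprSr; apply: LCb; exists i.+1.
Qed.

Lemma Lin_c r x y : coef y -> Lin r x -> Lin r (x * y).
Proof.
move=> hy hx; rewrite /Lin in hx *; rewrite -[x * y]mul1r mulrA; apply: (LCsand _ hx) => b [i [hi ->]].
by rewrite mul1r -coef_central //; apply: LCc => //; apply: LCb; exists i.
Qed.

Lemma coef_v k : vidx m k -> coef (v k).
Proof. by move=> hk; apply: ga_gen; right; right; exists k; auto. Qed.
Lemma coef_vi k : vidx m k -> coef (vi k).
Proof. by move=> hk; apply: ga_gen; right; right; exists k; auto. Qed.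
Lemma coef_opp x : coef x -> coef (- x).
Proof. exact: gen_opp. Qed.

Lemma poly_top mm : m = Some mm -> forall r, (r <= mm)%N ->
  Lin r (\prod_(1 <= k < r.+1) (t - v k) - t ^+ r).
Proof.
move=> em; elim=> [|r IH] hr.
  by rewrite big_geq // expr0 subrr; apply: LC0.
have hv : vidx m r.+1 by rewrite em /=; lia.
rewrite big_nat_recr //.
set z := \prod_(1 <= k < r.+1) (t - v k).
have -> : z * (t - v r.+1) - t ^+ r.+1
   = (z - t ^+ r) * t - (z - t ^+ r) * v r.+1 - t ^+ r * v r.+1.
  by rewrite !mulrBl !mulrBr -exprSr -zm.
apply: LCB; first apply: LCB.
- by apply: Lin_t; apply: IH; lia.
- apply: Lin_mono (leqnSn _) _; apply: Lin_c; [exact: coef_v|apply: IH; lia].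
- apply: Lin_c; first exact: coef_v.
  by apply: LCb; exists r.
Qed.

Lemma poly_inv mm : m = Some mm -> forall r, (r <= mm)%N ->
  exists d, [/\ coef d, (exists e, coef e /\ e * d = 1) &
    Lin r (ti * \prod_(1 <= k < r.+1) (t - v k) - d * ti)].
Proof.
move=> em; elim=> [|r IH] hr.
  exists 1; split; [exact: coef1|exists 1; split; [exact: coef1|exact: mulr1]|].
  by rewrite big_geq // mulr1 mul1r subrr; apply: LC0.
have hv : vidx m r.+1 by rewrite em /=; lia.
have [d [hd [e [he hed]] hz]] := IH ltac:(lia).
exists (- (d * v r.+1)); split.
- by apply: coef_opp; apply: ga_mul => //; exact: coef_v.
- exists (- (e * vi r.+1)); split; first by apply: coef_opp; apply: ga_mul => //; exact: coef_vi.
  by rewrite mulrN mulNr opprK -mulrA (mulrA (vi _)) (coef_central (coef_vi hv)) -mulrA hvv' // mulr1 hed.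
rewrite big_nat_recr // mulrA.
set Y := ti * _ in hz *.
have -> : Y * (t - v r.+1) - - (d * v r.+1) * ti
   = (Y - d * ti) * t - (Y - d * ti) * v r.+1 + d * t ^+ 0.
  rewrite expr0 mulr1 !mulrBl !mulrBr mulNr opprK -(mulrA d ti t) htt' mulr1.
  rewrite -(mulrA d ti) -(coef_central (coef_v hv) ti) mulrA.
  exact: zm2.
apply: LCD; first apply: LCB.
- exact: Lin_t.
- by apply: Lin_mono (leqnSn _) _; apply: Lin_c => //; exact: coef_v.
- by apply: LCc => //; apply: LCb; exists 0%N.
Qed.

Lemma tp_T a : LC BT (tp a).
Proof.
case E: m => [mm|]; last by apply: LCb; exists a; rewrite E.
have mm0 : (0 < mm)%N by move: Hm; rewrite E.
have hpol : \prod_(1 <= k < mm.+1) (t - v k) = 0 by move: hpoly; rewrite E.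
have BTk k : (k < mm)%N -> BT (t ^+ k).
  by move=> hk; exists (Posz k); rewrite E /=; split => //; rewrite ltz_nat.
have LinT x : Lin mm x -> LC BT x.
  by apply: LCmono => b [i [hi ->]]; apply: BTk.
have top : LC BT (t ^+ mm).
  have := poly_top E (leqnn mm); rewrite hpol sub0r => h.
  by rewrite -[t ^+ mm]opprK; apply: LinT; apply: LCN.
have tiT : LC BT ti.
  have [d [hd [e [he hed]] hz]] := poly_inv E (leqnn mm).
  move: hz; rewrite hpol mulr0 sub0r => hz.
  rewrite -[ti]mul1r -hed -mulrA -[_ * (d * ti)]opprK -mulrN.
  by apply: LCN; apply: LCc => //; apply: LinT.
have BTinv b : BT b -> exists k, (k < mm)%N /\ b = t ^+ k.
  move=> [a' [ha ->]]; move: ha; rewrite E; case: a' => [k|k] [h1 h2].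
    by exists k; split => //; rewrite -ltz_nat.
  by clear h2; move: h1; lia.
have clt x : LC BT x -> LC BT (t * x).
  move=> hx; rewrite -[t * x]mulr1; apply: (LCsand _ hx) => b /BTinv [k [hk ->]].
  rewrite mulr1 -exprS; case: (ltnP k.+1 mm) => h; first by apply: LCb; apply: BTk.
  by have -> : k.+1 = mm by lia.
have clti x : LC BT x -> LC BT (ti * x).
  move=> hx; rewrite -[ti * x]mulr1; apply: (LCsand _ hx) => b /BTinv [k [hk ->]].
  rewrite mulr1; case: k hk => [|k] hk; first by rewrite expr0 mulr1.
  by rewrite exprS mulrA htt' mul1r; apply: LCb; apply: BTk; lia.
case: a => [k|k]; rewrite /tp /=.
  elim: k => [|k IH]; first by rewrite expr0; apply: LCb; apply: (BTk 0%N).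
  by rewrite exprS; apply: clt.
elim: k => [|k IH]; first by rewrite expr1.
by rewrite exprS; apply: clti.
Qed.

Section Rank2.
Hypothesis n2 : (2 <= n)%N.

Let h11 : s 1 * si 1 = 1. Proof. by have [] := hsi (i:=1) ltac:(lia). Qed.
Let h11' : si 1 * s 1 = 1. Proof. by have [] := hsi (i:=1) ltac:(lia). Qed.
Let hsi1 : si 1 = s 1 - c. Proof. by apply: si_eq; lia. Qed.
Let hq1 : s 1 * s 1 = c * s 1 + 1. Proof. rewrite -expr2 hquad; [by rewrite /c -lock | lia]. Qed.

Definition L2 := s 1 * t * s 1.
Lemma hL : L2 * t = t * L2.
Proof. by rewrite /L2 !mulrA (hts1 n2). Qed.

Lemma I1 a : t * si 1 * tp a * s 1 =
  si 1 * tp a * s 1 * t + c * (t * s 1 * tp a) - c * (tp (a + 1) * s 1).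
Proof.
have hLA : L2 * tp a = tp a * L2 by apply: tp_comm; exact: hL.
have e0 : si 1 * L2 = t * s 1 by rewrite /L2 !mulrA h11' mul1r.
have e1 : t * si 1 = si 1 * L2 - c * t.
  by rewrite e0 hsi1 mulrBr c_central.
have e3 : L2 * s 1 = c * L2 + s 1 * t.
  by rewrite /L2 -!mulrA hq1 mulrDr mulr1 mulrDr !mulrA -(c_central (s 1 * t)) !mulrA.
have step1 : t * si 1 * tp a * s 1 = si 1 * tp a * (L2 * s 1) - c * (t * tp a * s 1).
  by rewrite e1 !mulrBl -(mulrA (si 1) L2) hLA !mulrA.
rewrite step1 e3 mulrDr -tpS.
have -> : si 1 * tp a * (c * L2) = c * (t * s 1 * tp a).
  by rewrite !mulrA -(c_central (si 1 * tp a)) -!mulrA (mulrA (s 1) t (s 1)) -hLA (mulrA (si 1)) e0 -mulrA.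
by rewrite (addrC (c * _)) !mulrA.
Qed.

Definition L2' := si 1 * ti * si 1.
Lemma hL' : L2' * ti = ti * L2'.
Proof.
have hA : t * s 1 * t * s 1 = s 1 * t * s 1 * t := hts1 n2.
set X := si 1 * ti * si 1 * ti.
set Y := ti * si 1 * ti * si 1.
have hX : X * (t * s 1 * t * s 1) = 1.
  rewrite /X -!mulrA (mulrA ti t) htt' mul1r (mulrA (si 1) (s 1)) h11' mul1r.
  by rewrite (mulrA ti t) htt' mul1r h11'.
have hY : (s 1 * t * s 1 * t) * Y = 1.
  rewrite /Y -!mulrA (mulrA t ti) htt mul1r (mulrA (s 1) (si 1)) h11 mul1r.
  by rewrite (mulrA t ti) htt mul1r h11.
have : X = Y by rewrite -[X]mulr1 -hY mulrA -hA hX mul1r.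
by rewrite /X /Y /L2' !mulrA.
Qed.

Lemma I2 a : ti * si 1 * tp a * s 1 =
  si 1 * tp a * s 1 * ti + c * (tp a * s 1 * ti) - c * (s 1 * tp (a - 1)).
Proof.
have hLt : L2' * t = t * L2' by exact: comm_inv hL' htt' htt.
have hLA : L2' * tp a = tp a * L2' by apply: tp_comm.
have e0 : ti * si 1 = s 1 * L2' by rewrite /L2' !mulrA h11 mul1r.
have step : ti * si 1 * tp a * s 1 = s 1 * tp a * si 1 * ti.
  rewrite e0 -(mulrA (s 1) L2') hLA /L2' !mulrA -(mulrA _ (si 1) (s 1)) h11' mulr1.
  by [].
have hs1 : s 1 = si 1 + c by apply: s_eq; lia.
have e1 : s 1 * tp a * si 1 * ti = si 1 * tp a * si 1 * ti + c * (tp a * si 1 * ti).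
  by rewrite {1}hs1 !mulrDl !mulrA.
have e2 : si 1 * tp a * si 1 * ti = si 1 * tp a * s 1 * ti - c * (si 1 * tp a * ti).
  have -> : si 1 * tp a * si 1 * ti = si 1 * tp a * (s 1 - c) * ti by rewrite -hsi1.
  by rewrite mulrBr mulrBl -(c_central (si 1 * tp a)) !mulrA.
have e3 : c * (tp a * si 1 * ti) = c * (tp a * s 1 * ti) - c * (c * (tp a * ti)).
  have -> : tp a * si 1 * ti = tp a * (s 1 - c) * ti by rewrite -hsi1.
  by rewrite mulrBr mulrBl mulrBr -(c_central (tp a)) !mulrA.
rewrite step e1 e2 e3 zm3 -mulrDr -tpPr; congr (_ - c * _).
by rewrite -!mulrA -mulrDl -hs1.
Qed.
End Rank2.

Definition Bas (b : S) := exists j a w,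
  (j <= n - 1)%N /\ Eset m a /\ Wt w /\ b = cinv j * tp a * P * w.
Definition Mn := LC Bas.

Lemma G_in j a w : (j <= n - 1)%N -> Wt w -> Mn (cinv j * tp a * P * w).
Proof.
move=> hj hw; have := tp_T a; rewrite /Mn -mulrA => h.
apply: (LCsand _ h) => b [a' [ha ->]]; rewrite mulrA.
by apply: LCb; exists j, a', w.
Qed.

Lemma Mn_one : Mn 1.
Proof.
have := @G_in (n - 1) 0 1 (leqnn _) (gen1 _).
rewrite tp0 mulr1 mulr1.
have := cinv_P_one (leqnn (n - 1)); rewrite subn1 prednK // => h.
by rewrite /P h.
Qed.

Lemma s_si_far i k : (1 <= i <= n - 1)%N -> (1 <= k <= n - 1)%N ->
  ((i.+1 < k) || (k.+1 < i))%N -> s i * si k = si k * s i.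
Proof.
move=> hi hk hf; have [h1 h2] := hsi hk.
exact: comm_inv (hfar hi hk hf) h1 h2.
Qed.

Lemma t_si k : (1 < k <= n - 1)%N -> t * si k = si k * t.
Proof.
move=> hk; have [h1 h2] := hsi (i:=k) ltac:(lia).
exact: comm_inv (hts hk) h1 h2.
Qed.

Lemma s_tp i a : (1 < i <= n - 1)%N -> s i * tp a = tp a * s i.
Proof. by move=> hi; apply: tp_comm; rewrite hts. Qed.

Lemma braid_inv j : (1 <= j)%N -> (j <= n - 2)%N ->
  s j * si j.+1 * si j = si j.+1 * si j * s j.+1.
Proof.
move=> j1 jn.
have [a1 a2] := hsi (i:=j) ltac:(lia).
have [b1 b2] := hsi (i:=j.+1) ltac:(lia).
have hab := hbr j1 jn.
have e1 : si j.+1 * si j * (s j * s j.+1 * s j) * si j.+1 * si j = s j * si j.+1 * si j.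
  by rewrite !mulrA -(mulrA (si j.+1) (si j) (s j)) a2 mulr1 b2 mul1r.
have e2 : si j.+1 * si j * (s j.+1 * s j * s j.+1) * si j.+1 * si j = si j.+1 * si j * s j.+1.
  by rewrite !mulrA -(mulrA _ (s j.+1) (si j.+1)) b1 mulr1 -(mulrA _ (s j) (si j)) a1 mulr1.
by rewrite -e1 hab e2.
Qed.

Lemma s_cinv j : (j <= n - 1)%N -> forall i, (1 <= i < j)%N ->
  s i * cinv j = cinv j * s i.+1.
Proof.
elim: j => [|j IH] hj i hi; first by lia.
rewrite cinvS.
case: (ltnP i j) => hij.
  rewrite mulrA s_si_far; try lia.
  by rewrite -mulrA IH; try lia; rewrite mulrA.
have eij : i = j by lia.
subst i.
case: j IH hj hi hij => [|j] IH hj hi hij; first by lia.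
rewrite cinvS !mulrA braid_inv; try lia.
rewrite -!mulrA; congr (_ * (_ * _)).
apply: comm_cinv => k hk; apply: s_si_far; lia.
Qed.

Lemma gen_s i j a w : (1 <= i <= n - 1)%N -> (j <= n - 1)%N -> Wt w ->
  Mn (s i * (cinv j * tp a * P * w)).
Proof.
move=> hi hj hw.
case: (ltngtP i j) => hij.
-
  rewrite !mulrA s_cinv //; last by lia.
  rewrite -(mulrA (cinv j)) s_tp; last by lia.
  rewrite mulrA -(mulrA _ (s i.+1) P) sP; try lia.
  rewrite mulrA -mulrA; apply: G_in => //; apply: ga_mul => //; apply: Wt_s; lia.
-
  case: (ltnP j.+1 i) => hij2.
  + have hc : s i * cinv j = cinv j * s i.
      apply: comm_cinv => k hk; apply: s_si_far; lia.
    rewrite !mulrA hc -(mulrA (cinv j)) s_tp; last by lia.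
    have ei : i = (i.-1).+1 by lia.
    have hsp : s i * P = P * s i.-1 by rewrite {1}ei sP //; lia.
    rewrite mulrA -(mulrA _ (s i) P) hsp.
    rewrite mulrA -mulrA; apply: G_in => //; apply: ga_mul => //; apply: Wt_s; lia.
  + have ei : i = j.+1 by lia.
    subst i.
    rewrite s_eq // mulrDl; apply: LCD.
    * by rewrite !mulrA -cinvS; apply: G_in.
    * by apply: LCc; [exact: coef_c| apply: G_in].
-
  subst j.
  case: i hi hj => [|i] hi hj; first by lia.
  have [h1 _] := hsi hi.
  rewrite cinvS !mulrA h1 mul1r; apply: G_in => //; lia.
Qed.

Lemma distr3 (D X Y Z R : S) :
  D * (X + c * Y - c * Z) * R = D * X * R + c * (D * Y * R) - c * (D * Z * R).
Proof.
rewrite mulrBr mulrDr !mulrBl !mulrDl.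
by rewrite !mulrA -(c_central D).
Qed.

Lemma PS : (2 <= n)%N -> P = s 1 * \prod_(2 <= i < n) s i.
Proof. by move=> n2; rewrite /P big_ltn. Qed.

Lemma gen_t j a w : (j <= n - 1)%N -> Wt w -> Mn (t * (cinv j * tp a * P * w)).
Proof.
move=> hj hw.
case: j hj => [|j] hj.
  have -> : t * (cinv 0 * tp a * P * w) = cinv 0 * tp (a + 1) * P * w.
    by rewrite cinv0 !mul1r !mulrA tpS.
  exact: G_in.
have n2 : (2 <= n)%N by lia.
set D := Dsh j.
set P' := \prod_(2 <= i < n) s i.
have hDt : t * D = D * t by apply: comm_Dsh => k hk; apply: t_si; lia.
have hPt : t * P' = P' * t by apply: comm_prod => i hi; apply: hts; lia.
have hDtp b : D * tp b = tp b * D by apply: tp_comm; rewrite hDt.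
have hPtp b : P' * tp b = tp b * P' by apply: tp_comm; rewrite hPt.
have hDP : D * P = P * cinv j by apply: Dsh_P; lia.
have hj' : (j <= n - 2)%N by lia.
have -> : t * (cinv j.+1 * tp a * P * w) = D * (t * si 1 * tp a * s 1) * (P' * w).
  by rewrite cinv_Dsh (PS n2) !mulrA hDt.
rewrite (I1 n2) distr3; apply: LCB; first apply: LCD.
- have -> : D * (si 1 * tp a * s 1 * t) * (P' * w) = cinv j.+1 * tp a * P * (t * w).
    rewrite cinv_Dsh (PS n2) -!mulrA.
    by rewrite (mulrA t P') hPt -mulrA.
  by apply: G_in => //; apply: ga_mul => //; exact: Wt_t.
- apply: LCc; first exact: coef_c.
  have -> : D * (t * s 1 * tp a) * (P' * w) = cinv 0 * tp 1 * P * (cinv j * tp a * w).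
    rewrite cinv0 mul1r tp1 !mulrA -(mulrA t P) -hDP (PS n2) -!mulrA.
    by rewrite (mulrA (tp a) P') -hPtp -(mulrA P') (mulrA D t) -hDt -!mulrA.
  apply: G_in => //; apply: ga_mul => //; apply: ga_mul; [exact: Wt_cinv|exact: Wt_tp].
- apply: LCc; first exact: coef_c.
  have -> : D * (tp (a + 1) * s 1) * (P' * w) = cinv 0 * tp (a + 1) * P * (cinv j * w).
    rewrite cinv0 mul1r !mulrA -(mulrA _ P) -hDP (PS n2) -!mulrA.
    by rewrite (mulrA D) hDtp -!mulrA.
  by apply: G_in => //; apply: ga_mul => //; exact: Wt_cinv.
Qed.

Lemma gen_ti j a w : (j <= n - 1)%N -> Wt w -> Mn (ti * (cinv j * tp a * P * w)).
Proof.
move=> hj hw.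
case: j hj => [|j] hj.
  have -> : ti * (cinv 0 * tp a * P * w) = cinv 0 * tp (a - 1) * P * w.
    by rewrite cinv0 !mul1r !mulrA tpP.
  exact: G_in.
have n2 : (2 <= n)%N by lia.
set D := Dsh j.
set P' := \prod_(2 <= i < n) s i.
have hDt : t * D = D * t by apply: comm_Dsh => k hk; apply: t_si; lia.
have hPt : t * P' = P' * t by apply: comm_prod => i hi; apply: hts; lia.
have hDti : ti * D = D * ti by apply: esym; apply: comm_inv (esym hDt) htt htt'.
have hPti : ti * P' = P' * ti by apply: esym; apply: comm_inv (esym hPt) htt htt'.
have hDtp b : D * tp b = tp b * D by apply: tp_comm; rewrite hDt.
have hPtp b : P' * tp b = tp b * P' by apply: tp_comm; rewrite hPt.
have hDP : D * P = P * cinv j by apply: Dsh_P; lia.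
have hj' : (j <= n - 2)%N by lia.
have -> : ti * (cinv j.+1 * tp a * P * w) = D * (ti * si 1 * tp a * s 1) * (P' * w).
  by rewrite cinv_Dsh (PS n2) !mulrA hDti.
rewrite (I2 n2) distr3; apply: LCB; first apply: LCD.
- have -> : D * (si 1 * tp a * s 1 * ti) * (P' * w) = cinv j.+1 * tp a * P * (ti * w).
    rewrite cinv_Dsh (PS n2) -!mulrA.
    by rewrite (mulrA ti P') hPti -mulrA.
  by apply: G_in => //; apply: ga_mul => //; exact: Wt_ti.
- apply: LCc; first exact: coef_c.
  have -> : D * (tp a * s 1 * ti) * (P' * w) = cinv 0 * tp a * P * (cinv j * ti * w).
    rewrite cinv0 mul1r !mulrA -(mulrA _ P) -hDP (PS n2) -!mulrA.
    by rewrite (mulrA ti P') hPti -(mulrA P') (mulrA D (tp a)) hDtp -!mulrA.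
  apply: G_in => //; apply: ga_mul => //; apply: ga_mul; [exact: Wt_cinv|exact: Wt_ti].
- apply: LCc; first exact: coef_c.
  have -> : D * (s 1 * tp (a - 1)) * (P' * w) = cinv 0 * tp 0 * P * (cinv j * tp (a - 1) * w).
    rewrite cinv0 tp0 !mul1r !mulrA -hDP (PS n2) -!mulrA.
    by rewrite (mulrA (tp _) P') -hPtp -!mulrA.
  apply: G_in => //; apply: ga_mul => //; apply: ga_mul; [exact: Wt_cinv|exact: Wt_tp].
Qed.

Lemma gen_all y b : HP y -> Bas b -> Mn (y * b).
Proof.
move=> hy [j [a [w [hj [ha [hw ->]]]]]].
have hc : coefP y -> Mn (y * (cinv j * tp a * P * w)).
  move=> hy'; apply: LCc; first exact: ga_gen.
  by apply: LCb; exists j, a, w.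
case: hy => [e|[e|[hk|[e|[e|[i [hi e]]]]]]]; try subst y.
- by apply: hc; left.
- by apply: hc; right; left.
- by apply: hc; right; right.
- exact: gen_t.
- exact: gen_ti.
- exact: gen_s.
Qed.

Lemma left_mul y : Hg y -> forall x, Mn x -> Mn (y * x).
Proof.
elim=> [a|y0 hy0|y1 y2 _ IH1 _ IH2|y1 y2 _ IH1 _ IH2] x hx.
- by apply: LCc => //; exact: ga_scal.
- rewrite -[y0 * x]mulr1; apply: (LCsand _ hx) => b hb.
  by rewrite mulr1; apply: gen_all.
- by rewrite mulrDl; apply: LCD; [apply: IH1|apply: IH2].
- by rewrite -mulrA; apply: IH1; apply: IH2.
Qed.

Lemma final x : Hg x -> Mn x.
Proof. by move=> hx; rewrite -[x]mulr1; apply: left_mul => //; exact: Mn_one. Qed.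

End Main.

Theorem mainTheorem2 (m : mval) (n : nat) (S : algType Cx)
  (q qi : S) (v vi : nat -> S) (t ti : S) (s si : nat -> S) :
  mval_ok m -> (1 <= n)%N ->
  hecke_rel m n q qi v vi t ti s ->
  (* si i is the inverse of sigma_i *)
  (forall i, (1 <= i <= n - 1)%N -> s i * si i = 1 /\ si i * s i = 1) ->
  let coef := gen_alg (fun y => y = q \/ y = qi \/
                 exists k, vidx m k /\ (y = v k \/ y = vi k)) in
  let Wt := gen_alg (fun y => y = q \/ y = qi \/
                 (exists k, vidx m k /\ (y = v k \/ y = vi k)) \/
                 y = t \/ y = ti \/
                 (exists i, (1 <= i <= n - 2)%N /\ y = s i)) in
  let H := gen_alg (fun y => y = q \/ y = qi \/
                 (exists k, vidx m k /\ (y = v k \/ y = vi k)) \/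
                 y = t \/ y = ti \/
                 (exists i, (1 <= i <= n - 1)%N /\ y = s i)) in
  forall x, H x ->
  lin_comb coef
    (fun b => exists (j : nat) (a : int) (w : S),
       (j <= n - 1)%N /\ Eset m a /\ Wt w /\
       b = (\prod_(0 <= k < j) si (j - k)%N) * tpow t ti a *
           (\prod_(1 <= i < n) s i) * w)
    x.
Proof.
move=> Hm Hn [[[hqq hqq'] hvv [hqc hvc] [htt htt']] [hbr hfar hts1 hts hquad] hpoly] hsi.
move=> coef Wt H x Hx.
have hvv1 : forall k, vidx m k -> v k * vi k = 1 by move=> k hk; case: (hvv k hk).
have hvv2 : forall k, vidx m k -> vi k * v k = 1 by move=> k hk; case: (hvv k hk).
exact: (final Hm Hn hqq hqq' hvv1 hvv2 hqc hvc htt htt' hbr hfar hts1 hts hquad hpoly hsi Hx).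
Qed.
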